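(* Every cograph admits a canonical dominating set.
   Context: All graphs are finite, simple and undirected. The union $G_1\cup G_2$ of two vertex-disjoint graphs has vertex set $V(G_1)\cup V(G_2)$ and edge set $E(G_1)\cup E(G_2)$; the join $G_1\vee G_2$ additionally contains all edges $vw$ with $v\in V(G_1)$, $w\in V(G_2)$. Cographs are defined recursively: a single vertex is a cograph, and the union and the join of two cographs are cographs. A set $D\subseteq V(G)$ is a dominating set if every vertex of $G$ is in $D$ or adjacent to a vertex of $D$. Two dominating sets $D,D'$ are adjacent if $|D\triangle D'|=1$. For dominating sets $D_p,D_q$ and an integer $k>0$, write $D_p\leftrightarrow_k D_q$ if there is a sequence $D_0=D_p,\dots,D_\ell=D_q$ ($\ell\ge0$) of dominating sets of $G$ with consecutive sets adjacent and $|D_i|\le k$ for all $i$. A minimum dominating set $D^*$ of $G$ is canonical if $D\leftrightarrow_{|D|+1} D^*$ for every dominating set $D$ of $G$. *)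

(* Defs.v *)
(* A simple graph is a symmetric irreflexive relation e on a finType T. *)
From mathcomp Require Import all_boot.
Set Implicit Arguments. Unset Strict Implicit. Unset Printing Implicit Defensive.

Section Graphs.
Variables (T : finType) (e : rel T).

(* Cographs, stated for induced subgraphs G[S]: G[S] is a cograph iff it is a
   single vertex, or S splits into two disjoint (nonempty, since cographs are
   nonempty) parts A, B, each inducing a cograph, with either no edge (union)
   or every edge (join) between A and B. *)
Inductive cograph_on : {set T} -> Prop :=
  | cograph_single (v : T) : cograph_on [set v]
  | cograph_union (A B : {set T}) :
      [disjoint A & B] -> cograph_on A -> cograph_on B ->
      (forall a b, a \in A -> b \in B -> ~~ e a b) ->
      cograph_on (A :|: B)
  | cograph_join (A B : {set T}) :
      [disjoint A & B] -> cograph_on A -> cograph_on B ->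
      (forall a b, a \in A -> b \in B -> e a b) ->
      cograph_on (A :|: B).

Definition cograph : Prop := cograph_on [set: T].

Definition dominating (D : {set T}) : bool :=
  [forall v, (v \in D) || [exists u in D, e u v]].

Definition symdiff (D D' : {set T}) : {set T} := (D :\: D') :|: (D' :\: D).

Definition dom_adj (D D' : {set T}) : bool := #|symdiff D D'| == 1.

(* D_p <->_k D_q : a sequence D_0 = D_p, ..., D_l = D_q (l >= 0) of dominating
   sets, consecutive ones adjacent, all of size <= k. *)
Definition reconf (k : nat) (Dp Dq : {set T}) : Prop :=
  exists s : seq {set T},
    [/\ path dom_adj Dp s, last Dp s = Dq &
        all (fun D => dominating D && (#|D| <= k)) (Dp :: s)].

Definition min_dominating (D : {set T}) : Prop :=
  dominating D /\ forall D', dominating D' -> #|D| <= #|D'|.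

Definition canonical_dom (Ds : {set T}) : Prop :=
  min_dominating Ds /\
  forall D, dominating D -> reconf (#|D|).+1 D Ds.

End Graphs.

(* Main.v *)
Require Import Defs.
From mathcomp Require Import all_boot.
Set Implicit Arguments. Unset Strict Implicit. Unset Printing Implicit Defensive.

Definition domS (T : finType) (e : rel T) (S D : {set T}) : bool :=
  (D \subset S) && [forall v in S, (v \in D) || [exists u in D, e u v]].

Inductive rc (T : finType) (e : rel T) (S : {set T}) (k : nat) :
  {set T} -> {set T} -> Prop :=
  | rc_refl D : domS e S D -> #|D| <= k -> rc e S k D D
  | rc_step D1 D2 D3 : domS e S D1 -> #|D1| <= k -> dom_adj D1 D2 ->
      rc e S k D2 D3 -> rc e S k D1 D3.

Lemma rc_trans T e S k (X Y Z : {set T}) :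
  rc e S k X Y -> rc e S k Y Z -> rc e S k X Z.
Proof.
elim=> [D _ _ //| D1 D2 D3 h1 h2 h3 _ IH] /IH H.
exact: rc_step h1 h2 h3 H.
Qed.

Lemma rc_mono T e S k k' (X Y : {set T}) :
  k <= k' -> rc e S k X Y -> rc e S k' X Y.
Proof.
move=> kk; elim=> [D h1 h2| D1 D2 D3 h1 h2 h3 _ IH].
  by apply: rc_refl h1 (leq_trans h2 kk).
exact: rc_step h1 (leq_trans h2 kk) h3 IH.
Qed.

Lemma rc_domL T e S k (X Y : {set T}) : rc e S k X Y -> domS e S X.
Proof. by case. Qed.

Lemma rc_domR T e S k (X Y : {set T}) : rc e S k X Y -> domS e S Y.
Proof. by elim. Qed.

Lemma domS_sup T e (S X Z : {set T}) :
  domS e S X -> X \subset Z -> Z \subset S -> domS e S Z.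
Proof.
case/andP=> _ /forall_inP H XZ ZS; rewrite /domS ZS /=.
apply/forall_inP=> v /H /orP [vX|/exists_inP [u uX euv]].
  by rewrite (subsetP XZ _ vX).
by apply/orP; right; apply/exists_inP; exists u => //; exact: (subsetP XZ).
Qed.

Lemma adj_del T (X : {set T}) z : z \in X -> dom_adj X (X :\ z).
Proof.
move=> zX; rewrite /dom_adj /symdiff.
suff -> : (X :\: (X :\ z)) :|: ((X :\ z) :\: X) = [set z] by rewrite cards1.
apply/setP=> x; rewrite !inE; case: (eqVneq x z) => [->|]; rewrite ?zX //=.
by case: (x \in X).
Qed.

Lemma adj_add T (X : {set T}) z : z \notin X -> dom_adj X (z |: X).
Proof.
move=> zX; rewrite /dom_adj /symdiff.
suff -> : (X :\: (z |: X)) :|: ((z |: X) :\: X) = [set z] by rewrite cards1.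
apply/setP=> x; rewrite !inE; case: (eqVneq x z) => [->|]; rewrite ?(negbTE zX) //=.
by case: (x \in X).
Qed.

Lemma adj_sym T (X Y : {set T}) : dom_adj X Y = dom_adj Y X.
Proof. by rewrite /dom_adj /symdiff setUC. Qed.

Lemma rc_down T e S k (X : {set T}) n : forall Z : {set T},
  #|Z :\: X| = n -> X \subset Z -> domS e S X -> Z \subset S -> #|Z| <= k ->
  rc e S k Z X.
Proof.
elim: n => [|n IH] Z hn XZ dX ZS Zk.
  have eZX : Z = X.
    apply/eqP; rewrite eqEsubset XZ andbT.
    by rewrite -setD_eq0 -cards_eq0 hn.
  rewrite eZX in Zk *; exact: rc_refl dX Zk.
have : Z :\: X != set0 by rewrite -cards_eq0 hn.
case/set0Pn=> z; rewrite inE => /andP [zX zZ].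
apply: (rc_step (D2 := Z :\ z)).
- exact: domS_sup dX XZ ZS.
- done.
- exact: adj_del.
apply: IH.
- have -> : (Z :\ z) :\: X = (Z :\: X) :\ z.
    by apply/setP=> x; rewrite !inE; case: (x \in X); case: (x == z); case: (x \in Z).
  by move: hn; rewrite (cardsD1 z (Z :\: X)) !inE zX zZ add1n => -[].
- apply/subsetP=> x xX; rewrite !inE (subsetP XZ _ xX) andbT.
  by apply/eqP=> exz; rewrite -exz xX in zX.
- done.
- exact: subset_trans (subsetDl _ _) ZS.
- exact: leq_trans (subset_leq_card (subsetDl _ _)) Zk.
Qed.

Lemma rc_up T e S k (Z : {set T}) n : forall X : {set T},
  #|Z :\: X| = n -> X \subset Z -> domS e S X -> Z \subset S -> #|Z| <= k ->
  rc e S k X Z.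
Proof.
elim: n => [|n IH] X hn XZ dX ZS Zk.
  have eZX : Z = X.
    apply/eqP; rewrite eqEsubset XZ andbT.
    by rewrite -setD_eq0 -cards_eq0 hn.
  rewrite eZX in Zk *; exact: rc_refl dX Zk.
have : Z :\: X != set0 by rewrite -cards_eq0 hn.
case/set0Pn=> z; rewrite inE => /andP [zX zZ].
have zXX : z |: X \subset Z by rewrite subUset sub1set zZ XZ.
apply: (rc_step (D2 := z |: X)).
- done.
- exact: leq_trans (subset_leq_card XZ) Zk.
- exact: adj_add.
apply: IH.
- have -> : Z :\: (z |: X) = (Z :\: X) :\ z.
    by apply/setP=> x; rewrite !inE; case: (x \in X); case: (x == z); case: (x \in Z).
  by move: hn; rewrite (cardsD1 z (Z :\: X)) !inE zX zZ add1n => -[].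
- done.
- apply: domS_sup dX _ (subset_trans zXX ZS); exact: subsetUr.
- done.
- done.
Qed.

Lemma rc_upL T e S k (X Z : {set T}) :
  X \subset Z -> domS e S X -> Z \subset S -> #|Z| <= k -> rc e S k X Z.
Proof. exact: rc_up. Qed.

Lemma rc_downL T e S k (X Z : {set T}) :
  X \subset Z -> domS e S X -> Z \subset S -> #|Z| <= k -> rc e S k Z X.
Proof. exact: rc_down. Qed.

Definition canonS (T : finType) (e : rel T) (S Ds : {set T}) : Prop :=
  [/\ domS e S Ds, (forall D, domS e S D -> #|Ds| <= #|D|) &
      (forall D, domS e S D -> rc e S (#|D|).+1 D Ds)].

Lemma domS_sub T e (S D : {set T}) : domS e S D -> D \subset S.
Proof. by case/andP. Qed.

Lemma domS_ne T e (S D : {set T}) v : v \in S -> domS e S D -> exists u, u \in D.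
Proof.
move=> vS /andP [_ /forall_inP /(_ v vS)] /orP [vD|/exists_inP [u uD _]].
  by exists v. by exists u.
Qed.

Lemma cog_ne T e (S : {set T}) : cograph_on e S -> exists v, v \in S.
Proof.
elim=> [v| A B _ _ [a aA] _ _ _ | A B _ _ [a aA] _ _ _].
- by exists v; rewrite inE.
- by exists a; rewrite inE aA.
- by exists a; rewrite inE aA.
Qed.

Lemma canon_univ T e (S : {set T}) u :
  u \in S -> domS e S [set u] -> canonS e S [set u].
Proof.
move=> uS du; split => // D dD.
  have [x xD] := domS_ne uS dD.
  by rewrite cards1 card_gt0; apply/set0Pn; exists x.
have uDS : u |: D \subset S by rewrite subUset sub1set uS (domS_sub dD).
have szU : #|u |: D| <= #|D|.+1 by rewrite cardsU1; case: (u \notin D).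
apply: (rc_trans (Y := u |: D)).
  apply: rc_upL => //; exact: subsetUr.
apply: rc_downL => //; exact: subsetUl.
Qed.

Lemma domS_U T e (A B X Y : {set T}) :
  domS e A X -> domS e B Y -> domS e (A :|: B) (X :|: Y).
Proof.
move=> /andP [XA /forall_inP hX] /andP [YB /forall_inP hY].
rewrite /domS (setUSS XA YB) /=; apply/forall_inP=> v; rewrite inE.
case/orP=> [/hX|/hY] /orP [vD|/exists_inP [u uD euv]];
  rewrite ?inE ?vD ?orbT //; apply/orP; right; apply/exists_inP; exists u => //;
  by rewrite inE uD ?orbT.
Qed.

Lemma domS_I T e (A B D : {set T}) : symmetric e ->
  (forall a b, a \in A -> b \in B -> ~~ e a b) ->
  domS e (A :|: B) D -> domS e A (D :&: A).
Proof.
move=> esym noe /andP [DS /forall_inP hD].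
rewrite /domS subsetIr /=; apply/forall_inP=> v vA.
have := hD v; rewrite inE vA => /(_ isT) /orP [vD|/exists_inP [u uD euv]].
  by rewrite inE vD vA.
apply/orP; right; apply/exists_inP; exists u => //; rewrite inE uD /=.
have := subsetP DS u uD; rewrite inE => /orP [//|uB].
by have := noe v u vA uB; rewrite esym euv.
Qed.

Lemma adj_lift T (A B C D1 D2 : {set T}) : [disjoint A & B] ->
  C \subset B -> D1 \subset A -> D2 \subset A ->
  dom_adj D1 D2 -> dom_adj (D1 :|: C) (D2 :|: C).
Proof.
move=> dAB CB D1A D2A; rewrite /dom_adj /symdiff.
suff -> : (D1 :|: C) :\: (D2 :|: C) :|: (D2 :|: C) :\: (D1 :|: C) =
  (D1 :\: D2) :|: (D2 :\: D1) by [].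
apply/setP=> x; rewrite !inE.
case xC: (x \in C); last by rewrite !orbF.
have xA : x \in A = false by apply: (disjointFl dAB); exact: subsetP CB x xC.
have -> : x \in D1 = false by apply/negbTE/negP=> /(subsetP D1A); rewrite xA.
by have -> : x \in D2 = false by apply/negbTE/negP=> /(subsetP D2A); rewrite xA.
Qed.

Lemma rc_lift T e (A B C D1 D2 : {set T}) k : [disjoint A & B] ->
  C \subset B -> domS e B C -> rc e A k D1 D2 ->
  rc e (A :|: B) (k + #|C|) (D1 :|: C) (D2 :|: C).
Proof.
move=> dAB CB dC; elim=> [D dD Dk| X Y Z dX Xk adj r IH].
  apply: rc_refl; first exact: domS_U.
  exact: leq_trans (leq_card_setU _ _).1 (leq_add Dk (leqnn _)).
apply: rc_step IH.
- exact: domS_U.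
- exact: leq_trans (leq_card_setU _ _).1 (leq_add Xk (leqnn _)).
- apply: adj_lift dAB CB _ _ adj; apply: domS_sub; [exact: dX| exact: rc_domL r].
Qed.

Lemma card_split T (A B D : {set T}) : D \subset A :|: B -> [disjoint A & B] ->
  #|D| = #|D :&: A| + #|D :&: B|.
Proof.
move=> DAB dAB.
have eD : D = (D :&: A) :|: (D :&: B).
  by apply/setP=> x; rewrite !inE -andb_orr; case xD: (x \in D); rewrite //= -in_setU (subsetP DAB).
rewrite {1}eD; apply/eqP; rewrite (leq_card_setU _ _).2.
by apply: (disjointWl (subsetIr _ _)); apply: (disjointWr (subsetIr _ _)).
Qed.

Lemma split_eq T (A B D : {set T}) : D \subset A :|: B ->
  D = (D :&: A) :|: (D :&: B).
Proof.
move=> DAB.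
by apply/setP=> x; rewrite !inE -andb_orr; case xD: (x \in D); rewrite //= -in_setU (subsetP DAB).
Qed.

Lemma canon_union T e (A B DsA DsB : {set T}) : symmetric e -> [disjoint A & B] ->
  (forall a b, a \in A -> b \in B -> ~~ e a b) ->
  canonS e A DsA -> canonS e B DsB -> canonS e (A :|: B) (DsA :|: DsB).
Proof.
move=> esym dAB noe [dsA mA hA] [dsB mB hB].
have dBA : [disjoint B & A] by rewrite disjoint_sym.
have noe' : forall b a, b \in B -> a \in A -> ~~ e b a.
  by move=> b a bB aA; rewrite esym; apply: noe.
have dIA : forall D, domS e (A :|: B) D -> domS e A (D :&: A).
  by move=> D; apply: domS_I.
have dIB : forall D, domS e (A :|: B) D -> domS e B (D :&: B).
  by move=> D; rewrite setUC; apply: domS_I.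
split.
- exact: domS_U.
- move=> D dD; rewrite (card_split (domS_sub dD) dAB).
  exact: leq_trans (leq_card_setU _ _).1 (leq_add (mA _ (dIA _ dD)) (mB _ (dIB _ dD))).
move=> D dD.
have r1 := rc_lift dAB (subsetIr D B) (dIB _ dD) (hA _ (dIA _ dD)).
have r2 := rc_lift dBA (domS_sub dsA) dsA (hB _ (dIB _ dD)).
rewrite [B :|: A]setUC [_ :&: B :|: DsA]setUC [DsB :|: DsA]setUC in r2.
rewrite -(split_eq (domS_sub dD)) in r1.
have cD := card_split (domS_sub dD) dAB.
apply: (rc_trans (Y := DsA :|: (D :&: B))).
  by apply: rc_mono r1; rewrite cD addSn.
apply: rc_mono r2.
rewrite cD addSn ltnS addnC leq_add2r; apply: mA; exact: dIA.
Qed.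

Lemma card3 (T : finType) (v a b : T) : #|[set v; a; b]| <= 3.
Proof.
apply: leq_trans (leq_card_setU _ _).1 _.
rewrite cards1 cards2 addn1 ltnS.
by case: (v != a).
Qed.

Lemma chain_ab T e (S D : {set T}) v w a b :
  domS e S D -> v \in D -> w \in [set a; b] -> a \in S -> b \in S ->
  domS e S [set v; w] -> domS e S [set a; b] -> 2 <= #|D| -> rc e S (#|D|).+1 D [set a; b].
Proof.
move=> dD vD wab aS bS dvw dab D2.
have DS := domS_sub dD.
have vS : v \in S by exact: subsetP DS v vD.
have wS : w \in S by move: wab; rewrite !inE => /orP [] /eqP ->.
have szU : #|w |: D| <= #|D|.+1 by rewrite cardsU1; case: (w \notin D).
apply: (rc_trans (Y := w |: D)).
  apply: rc_upL => //; [exact: subsetUr| by rewrite subUset sub1set wS DS].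
apply: (rc_trans (Y := [set v; w])).
  apply: rc_downL => //; first by rewrite subUset !sub1set !inE vD eqxx orbT.
  by rewrite subUset sub1set wS DS.
have vabS : [set v; a; b] \subset S by rewrite !subUset !sub1set vS aS bS.
have s3 : #|[set v; a; b]| <= #|D|.+1 by apply: leq_trans (card3 v a b) _.
apply: (rc_trans (Y := [set v; a; b])).
  apply: rc_upL => //.
  rewrite subUset !sub1set !inE eqxx /=.
  by move: wab; rewrite !inE => /orP [] /eqP ->; rewrite eqxx ?orbT.
apply: rc_downL => //; by rewrite subUset !sub1set !inE !eqxx ?orbT.
Qed.

Lemma canon_join T e (A B : {set T}) : symmetric e ->
  (exists a, a \in A) -> (exists b, b \in B) ->
  (forall a b, a \in A -> b \in B -> e a b) ->
  exists Ds, canonS e (A :|: B) Ds.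
Proof.
move=> esym [a aA] [b bB] alle.
set S := A :|: B.
have aS : a \in S by rewrite inE aA.
have bS : b \in S by rewrite inE bB orbT.
have dpair : forall v w, v \in A -> w \in B -> domS e S [set v; w].
  move=> v w vA wB; rewrite /domS subUset !sub1set !inE vA wB orbT /=.
  apply/forall_inP=> x; rewrite inE => /orP [xA|xB]; apply/orP; right;
    apply/exists_inP.
    by exists w; rewrite ?inE ?eqxx ?orbT // esym alle.
  by exists v; rewrite ?inE ?eqxx ?orbT // alle.
case: (boolP [exists u in S, domS e S [set u]]).
  case/exists_inP=> u uS du; exists [set u]; exact: canon_univ.
move=> nosing.
have dab := dpair a b aA bB.
have ge2 : forall D, domS e S D -> 2 <= #|D|.
  move=> D dD; have [x xD] := domS_ne aS dD.
  case: (ltnP 1 #|D|) => // le1.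
  have : #|D| == 1.
    rewrite eqn_leq le1 card_gt0; apply/set0Pn; by exists x.
  case/cards1P=> u eD; move/negP: nosing; case; apply/exists_inP; exists u => //.
    by apply: (subsetP (domS_sub dD)); rewrite eD inE.
  by rewrite -eD.
exists [set a; b]; split => //.
  move=> D dD; apply: leq_trans (ge2 _ dD); by rewrite cards2; case: (a != b).
move=> D dD.
have [v vD] := domS_ne aS dD.
have := subsetP (domS_sub dD) v vD; rewrite inE => /orP [vA|vB].
  apply: (chain_ab dD vD _ aS bS (dpair _ _ vA bB) dab (ge2 _ dD)).
  by rewrite !inE eqxx orbT.
apply: (chain_ab (w := a) dD vD _ aS bS _ dab (ge2 _ dD)); first by rewrite !inE eqxx.
have -> : [set v; a] = [set a; v] by apply/setP=> x; rewrite !inE orbC.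
exact: dpair.
Qed.

Lemma cog_canon T e (S : {set T}) : symmetric e -> cograph_on e S ->
  exists Ds, canonS e S Ds.
Proof.
move=> esym; elim=> [v| A B dAB cA [DsA hA] cB [DsB hB] noe
                     | A B dAB cA _ cB _ alle].
- exists [set v]; apply: canon_univ; first exact: set11.
  rewrite /domS subxx /=; apply/forall_inP=> x; by rewrite inE => ->.
- exists (DsA :|: DsB); exact: canon_union.
- exact: canon_join esym (cog_ne cA) (cog_ne cB) alle.
Qed.

Lemma domT T e (D : {set T}) : domS e [set: T] D = dominating e D.
Proof.
rewrite /domS subsetT /dominating /=.
apply/forall_inP/forallP => H v; first exact: H.
by move=> _; exact: H.
Qed.

Lemma rc_reconf T e k (X Y : {set T}) : rc e [set: T] k X Y -> reconf e k X Y.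
Proof.
elim=> [D dD Dk| D1 D2 D3 d1 k1 adj _ [s [p l a]]].
  by exists [::]; split => //=; rewrite -domT dD Dk.
exists (D2 :: s); split => //=.
- by rewrite adj p.
- by move: a => /= ->; rewrite -domT d1 k1.
Qed.

Theorem lemma5 (T : finType) (e : rel T) :
  symmetric e -> irreflexive e -> cograph e ->
  exists Ds : {set T}, canonical_dom e Ds.
Proof.
move=> esym _ cg.
have [Ds [dDs mDs hDs]] := cog_canon esym cg.
exists Ds; split.
  split; first by rewrite -domT.
  by move=> D; rewrite -domT; apply: mDs.
by move=> D; rewrite -domT => dD; apply: rc_reconf; apply: hDs.
Qed.
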